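(* Let $L$ be a normalised lattice in $\mathrm{Osc}_1$, $r=r(L)$, $q=\operatorname{ord}(\lambda(L))$. There exists $S\in\mathrm{SO}(2)$ (acting on $\mathbb C\cong\mathbb R^2$) such that $F_S(L)$, where $F_S(\xi,z,t)=(S\xi,z,t)$, is generated by elements $\alpha=(\tfrac1{\sqrt\nu},z_\alpha,0)$, $\beta=(-\tfrac{\mu}{\sqrt\nu}+i\sqrt\nu,z_\beta,0)$, $\gamma=(0,\tfrac1r,0)$ and some $\delta$, for suitable $z_\alpha,z_\beta\in\mathbb R$ and suitable $(\mu,\nu)\in\mathcal F$. If $q=4$ then $\mu+i\nu=i$, and if $q\in\{3,6\}$ then $\mu+i\nu=e^{\pi i/3}$. If moreover $\delta\in F_S(L)$ is chosen so that its projection to the $\mathbb R$-factor equals $\lambda(L)$, then $\alpha,\beta,\gamma,\delta$ are adapted generators of $F_S(L)$.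
   Context: $\mathrm{Osc}_1$ is the set $\mathbb C\times\mathbb R\times\mathbb R$ with multiplication $(\xi_1,z_1,t_1)(\xi_2,z_2,t_2)=(\xi_1+e^{it_1}\xi_2,\ z_1+z_2+\tfrac12\operatorname{Im}(\overline{\xi_1}e^{it_1}\xi_2),\ t_1+t_2)$; $H=\mathbb C\times\mathbb R\times\{0\}$, $Z(H)=\{0\}\times\mathbb R\times\{0\}$. For a lattice $L$: $L\cap H\cong H_1^r(\mathbb Z)=\langle\alpha,\beta,\gamma\mid\alpha\beta\alpha^{-1}\beta^{-1}=\gamma^r,\gamma\text{ central}\rangle$ for a unique $r=r(L)$; the projection of $L$ to the last factor is generated by a unique $\lambda(L)\in\pi\mathbb N_{>0}\cup\bigcup_{\lambda_0\in\{\pi/3,\pi/2,2\pi/3\}}(\lambda_0+2\pi\mathbb Z)$, and $\operatorname{ord}(\lambda)$ is the least $q\ge1$ with $q\lambda\in2\pi\mathbb Z$. $L$ is normalised if the projection of $L\cap H$ to $H/Z(H)\cong\mathbb C$ has covolume one. $\mathcal F=\{(\mu,\nu):\nu>0,\ \mu\in[0,\tfrac12],\ \mu^2+\nu^2\ge1\}\cup\{(\mu,\nu):\nu>0,\ \mu\in(-\tfrac12,0),\ \mu^2+\nu^2>1\}$, identified with $\mu+i\nu$. Generators $\alpha,\beta,\gamma,\delta$ of $L$ are adapted if: the $\mathbb R$-component of $\delta$ is $\lambda(L)$; $\alpha,\beta,\gamma$ generate $L\cap H$ with $\gamma$ central and $\alpha\beta\alpha^{-1}\beta^{-1}=\gamma^r$;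 the matrix of the automorphism induced by conjugation with $\delta$ on $(L\cap H)/Z(L\cap H)\cong\mathbb Z^2$ (basis: classes of $\alpha,\beta$) is one of $I_2,-I_2,\begin{pmatrix}0&-1\\1&-1\end{pmatrix},\begin{pmatrix}0&-1\\1&0\end{pmatrix},\begin{pmatrix}1&-1\\1&0\end{pmatrix}$; and the projections of $\alpha,\beta$ to $\mathbb C\cong\mathbb R^2$ form a positively oriented basis. *)

(* Defs.v *)
From Stdlib Require Import Reals ZArith.
Open Scope R_scope.

(* An element (xi, z, t) of Osc_1 = C x R x R, with xi = xr + i xi. *)
Record Osc := mkOsc { xr : R; xim : R; zc : R; tc : R }.

Definition osc_id : Osc := mkOsc 0 0 0 0.

(* (xi1,z1,t1)(xi2,z2,t2) = (xi1 + e^{it1} xi2, z1+z2+1/2 Im(conj xi1 e^{it1} xi2), t1+t2) *)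
Definition osc_mul (g h : Osc) : Osc :=
  let wr := cos (tc g) * xr h - sin (tc g) * xim h in
  let wi := sin (tc g) * xr h + cos (tc g) * xim h in
  mkOsc (xr g + wr) (xim g + wi)
        (zc g + zc h + / 2 * (xr g * wi - xim g * wr))
        (tc g + tc h).

(* inverse: (xi,z,t)^{-1} = (-e^{-it} xi, -z, -t) *)
Definition osc_inv (g : Osc) : Osc :=
  mkOsc (- (cos (tc g) * xr g + sin (tc g) * xim g))
        (- (- sin (tc g) * xr g + cos (tc g) * xim g))
        (- zc g) (- tc g).

Fixpoint osc_pow (g : Osc) (n : nat) : Osc :=
  match n with O => osc_id | S n' => osc_mul g (osc_pow g n') end.

Definition osc_zpow (g : Osc) (k : Z) : Osc :=
  match k with
  | Z0 => osc_id
  | Zpos p => osc_pow g (Pos.to_nat p)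
  | Zneg p => osc_inv (osc_pow g (Pos.to_nat p))
  end.

Definition osc_norm (g : Osc) : R :=
  Rmax (Rmax (Rabs (xr g)) (Rabs (xim g))) (Rmax (Rabs (zc g)) (Rabs (tc g))).

Definition subgroup (L : Osc -> Prop) : Prop :=
  L osc_id /\ (forall g h, L g -> L h -> L (osc_mul g h)) /\
  (forall g, L g -> L (osc_inv g)).

Definition discrete (L : Osc -> Prop) : Prop :=
  exists eps, 0 < eps /\ forall g, L g -> osc_norm g < eps -> g = osc_id.

(* cocompact: Osc_1 = L K for some compact (equivalently, bounded) set K *)
Definition cocompact (L : Osc -> Prop) : Prop :=
  exists M, forall g, exists l k, L l /\ osc_norm k <= M /\ g = osc_mul l k.

Definition lattice (L : Osc -> Prop) : Prop :=
  subgroup L /\ discrete L /\ cocompact L.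

(* L ∩ H, H = C x R x {0} *)
Definition inH (L : Osc -> Prop) (g : Osc) : Prop := L g /\ tc g = 0.

(* Concrete model of H_1^r(Z) = <a,b,c | [a,b] = c^r, c central>:
   Z^3 with (a,b,c)(a',b',c') = (a+a', b+b', c+c'+r a b'). *)
Definition heis_mul (r : Z) (x y : Z * Z * Z) : Z * Z * Z :=
  let '(a, b, c) := x in let '(a', b', c') := y in
  ((a + a')%Z, (b + b')%Z, (c + c' + r * a * b')%Z).

Definition heis_type (L : Osc -> Prop) (r : nat) : Prop :=
  (0 < r)%nat /\
  exists phi : Z * Z * Z -> Osc,
    (forall x y, phi (heis_mul (Z.of_nat r) x y) = osc_mul (phi x) (phi y)) /\
    (forall x y, phi x = phi y -> x = y) /\
    (forall g, inH L g <-> exists x, phi x = g).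

Definition lambda_set (l : R) : Prop :=
  (exists n : nat, (0 < n)%nat /\ l = INR n * PI) \/
  (exists (l0 : R) (k : Z),
      (l0 = PI / 3 \/ l0 = PI / 2 \/ l0 = 2 * PI / 3) /\ l = l0 + 2 * PI * IZR k).

Definition lambda_of (L : Osc -> Prop) (l : R) : Prop :=
  lambda_set l /\
  forall t, (exists g, L g /\ tc g = t) <-> (exists k : Z, t = IZR k * l).

Definition in_2piZ (x : R) : Prop := exists k : Z, x = 2 * PI * IZR k.
Definition is_ord (l : R) (q : nat) : Prop :=
  (1 <= q)%nat /\ in_2piZ (INR q * l) /\
  forall q', (1 <= q')%nat -> (q' < q)%nat -> ~ in_2piZ (INR q' * l).

(* normalised: projection of L ∩ H to H/Z(H) = C has covolume one *)
Definition normalised (L : Osc -> Prop) : Prop :=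
  exists u1 u2 v1 v2 : R,
    (forall w1 w2, (exists g, inH L g /\ xr g = w1 /\ xim g = w2) <->
       (exists m n : Z, w1 = IZR m * u1 + IZR n * v1 /\ w2 = IZR m * u2 + IZR n * v2)) /\
    Rabs (u1 * v2 - u2 * v1) = 1.

Definition in_F (mu nu : R) : Prop :=
  (0 < nu /\ 0 <= mu <= / 2 /\ 1 <= mu ^ 2 + nu ^ 2) \/
  (0 < nu /\ - / 2 < mu < 0 /\ 1 < mu ^ 2 + nu ^ 2).

(* S in SO(2) given as (c, s) with c^2+s^2 = 1 : S = [[c,-s],[s,c]];
   F_S(xi,z,t) = (S xi, z, t) *)
Definition in_SO2 (c s : R) : Prop := c ^ 2 + s ^ 2 = 1.
Definition F_S (c s : R) (g : Osc) : Osc :=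
  mkOsc (c * xr g - s * xim g) (s * xr g + c * xim g) (zc g) (tc g).
Definition image_FS (c s : R) (L : Osc -> Prop) (g : Osc) : Prop :=
  exists h, L h /\ g = F_S c s h.

Inductive gen (X : Osc -> Prop) : Osc -> Prop :=
| gen_id : gen X osc_id
| gen_base : forall x, X x -> gen X x
| gen_mul : forall x y, gen X x -> gen X y -> gen X (osc_mul x y)
| gen_inv : forall x, gen X x -> gen X (osc_inv x).

Definition set3 (a b c : Osc) (x : Osc) : Prop := x = a \/ x = b \/ x = c.
Definition set4 (a b c d : Osc) (x : Osc) : Prop := x = a \/ x = b \/ x = c \/ x = d.

Definition generates (L : Osc -> Prop) (a b c d : Osc) : Prop :=
  forall g, L g <-> gen (set4 a b c d) g.

Definition in_center_LH (L : Osc -> Prop) (g : Osc) : Prop :=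
  inH L g /\ forall h, inH L h -> osc_mul g h = osc_mul h g.

(* x and y have the same class in (L∩H)/Z(L∩H) *)
Definition same_class (L : Osc -> Prop) (x y : Osc) : Prop :=
  in_center_LH L (osc_mul (osc_inv y) x).

(* the matrix [[m11,m12],[m21,m22]] (columns = images of the basis [a],[b])
   of the automorphism of (L∩H)/Z(L∩H) induced by conjugation with d *)
Definition conj_matrix (L : Osc -> Prop) (a b d : Osc) (m11 m12 m21 m22 : Z) : Prop :=
  same_class L (osc_mul (osc_mul d a) (osc_inv d))
             (osc_mul (osc_zpow a m11) (osc_zpow b m21)) /\
  same_class L (osc_mul (osc_mul d b) (osc_inv d))
             (osc_mul (osc_zpow a m12) (osc_zpow b m22)).

Definition allowed_matrix (m11 m12 m21 m22 : Z) : Prop :=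
  (m11, m12, m21, m22) = (1, 0, 0, 1)%Z \/
  (m11, m12, m21, m22) = (-1, 0, 0, -1)%Z \/
  (m11, m12, m21, m22) = (0, -1, 1, -1)%Z \/
  (m11, m12, m21, m22) = (0, -1, 1, 0)%Z \/
  (m11, m12, m21, m22) = (1, -1, 1, 0)%Z.

Definition adapted (L : Osc -> Prop) (r : nat) (l : R) (a b c d : Osc) : Prop :=
  generates L a b c d /\
  tc d = l /\
  (forall g, inH L g <-> gen (set3 a b c) g) /\
  in_center_LH L c /\
  osc_mul (osc_mul (osc_mul a b) (osc_inv a)) (osc_inv b) = osc_pow c r /\
  (exists m11 m12 m21 m22 : Z,
      conj_matrix L a b d m11 m12 m21 m22 /\ allowed_matrix m11 m12 m21 m22) /\
  0 < xr a * xim b - xim a * xr b.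

(* Main.v *)
Require Import Defs.
From Stdlib Require Import Reals ZArith.
Open Scope R_scope.
From Stdlib Require Import Znumtheory Lia Lra List Arith.
Import Defs.
Open Scope R_scope.

Lemma osc_eta g : g = mkOsc (xr g) (xim g) (zc g) (tc g).
Proof. destruct g; reflexivity. Qed.

Lemma mul0 g h : tc g = 0 -> osc_mul g h =
  mkOsc (xr g + xr h) (xim g + xim h) (zc g + zc h + / 2 * (xr g * xim h - xim g * xr h)) (tc h).
Proof. intro H. unfold osc_mul. rewrite H, cos_0, sin_0. f_equal; ring. Qed.

Lemma inv0 g : tc g = 0 -> osc_inv g = mkOsc (- xr g) (- xim g) (- zc g) 0.
Proof. intro H. unfold osc_inv. rewrite H, cos_0, sin_0. f_equal; ring. Qed.

Lemma tc_mul g h : tc (osc_mul g h) = tc g + tc h. Proof. reflexivity. Qed.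
Lemma tc_inv g : tc (osc_inv g) = - tc g. Proof. reflexivity. Qed.

Lemma cs1 t : cos t ^ 2 + sin t ^ 2 = 1.
Proof. rewrite <- (sin2_cos2 t). unfold Rsqr. ring. Qed.

Lemma mul_assoc g h k : osc_mul (osc_mul g h) k = osc_mul g (osc_mul h k).
Proof.
  destruct g as [x1 y1 z1 t1], h as [x2 y2 z2 t2], k as [x3 y3 z3 t3].
  unfold osc_mul; simpl. rewrite cos_plus, sin_plus.
  pose proof (cs1 t1) as H.
  f_equal; try ring.
  apply Rminus_diag_uniq.
  match goal with |- ?a - ?b = 0 =>
   replace (a - b) with ((cos t1 ^ 2 + sin t1 ^ 2 - 1) * (/2 * (x2 * (sin t2 * x3 + cos t2 * y3) - y2 * (cos t2 * x3 - sin t2 * y3)))) by ring end.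
  rewrite H; ring.
Qed.

Lemma inv_l g : osc_mul (osc_inv g) g = osc_id.
Proof.
  destruct g as [x y z t]. unfold osc_mul, osc_inv, osc_id; simpl.
  rewrite cos_neg, sin_neg. pose proof (cs1 t).
  f_equal; try ring.
Qed.

Lemma mul_id_r g : osc_mul g osc_id = g.
Proof. destruct g; unfold osc_mul, osc_id; simpl; f_equal; ring. Qed.

Lemma mul_inv_cancel g d : osc_mul (osc_mul g (osc_inv d)) d = g.
Proof. rewrite mul_assoc, inv_l, mul_id_r. reflexivity. Qed.

Lemma conj_xi g h : tc h = 0 ->
  xr (osc_mul (osc_mul g h) (osc_inv g)) = cos (tc g) * xr h - sin (tc g) * xim h /\
  xim (osc_mul (osc_mul g h) (osc_inv g)) = sin (tc g) * xr h + cos (tc g) * xim h /\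
  tc (osc_mul (osc_mul g h) (osc_inv g)) = 0.
Proof.
  intro H. destruct g as [x y z t], h as [x2 y2 z2 t2]. simpl in H. subst t2.
  unfold osc_mul, osc_inv; simpl. rewrite Rplus_0_r. pose proof (cs1 t).
  split; [|split].
  - apply Rminus_diag_uniq.
    match goal with |- ?a - ?b = 0 =>
     replace (a - b) with ((cos t ^ 2 + sin t ^ 2 - 1) * (-x)) by ring end.
    rewrite H; ring.
  - apply Rminus_diag_uniq.
    match goal with |- ?a - ?b = 0 =>
     replace (a - b) with ((cos t ^ 2 + sin t ^ 2 - 1) * (-y)) by ring end.
    rewrite H; ring.
  - ring.
Qed.

Lemma central g h : xr g = 0 -> xim g = 0 -> tc g = 0 -> osc_mul g h = osc_mul h g.
Proof.
  intros H1 H2 H3. destruct g as [x y z t]; simpl in *; subst.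
  unfold osc_mul; simpl. rewrite cos_0, sin_0. f_equal; ring.
Qed.

Lemma F_mul c s g h : in_SO2 c s -> F_S c s (osc_mul g h) = osc_mul (F_S c s g) (F_S c s h).
Proof.
  unfold in_SO2; intro H.
  destruct g as [x1 y1 z1 t1], h as [x2 y2 z2 t2]. unfold F_S, osc_mul; simpl.
  f_equal; try ring.
  apply Rminus_diag_uniq.
  match goal with |- ?a - ?b = 0 =>
   replace (a - b) with ((c ^ 2 + s ^ 2 - 1) * (- / 2 * (x1 * (sin t1 * x2 + cos t1 * y2) - y1 * (cos t1 * x2 - sin t1 * y2)))) by ring end.
  rewrite H; ring.
Qed.

Lemma F_inv c s g : F_S c s (osc_inv g) = osc_inv (F_S c s g).
Proof. destruct g; unfold F_S, osc_inv; simpl; f_equal; ring. Qed.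

Lemma F_id c s : F_S c s osc_id = osc_id.
Proof. unfold F_S, osc_id; simpl; f_equal; ring. Qed.


Lemma pow0 g n : tc g = 0 -> osc_pow g n = mkOsc (INR n * xr g) (INR n * xim g) (INR n * zc g) 0.
Proof.
  intro H. induction n as [|n IH].
  - simpl. unfold osc_id. f_equal; ring.
  - simpl osc_pow. rewrite mul0 by exact H. rewrite IH. cbn [xr xim zc tc]. rewrite S_INR. f_equal; ring.
Qed.


Lemma tc_pow g n : tc (osc_pow g n) = INR n * tc g.
Proof. induction n; simpl osc_pow. cbn [tc osc_id]; simpl INR; ring. rewrite tc_mul, IHn, S_INR. ring. Qed.

Lemma tc_zpow g k : tc (osc_zpow g k) = IZR k * tc g.
Proof. destruct k; simpl osc_zpow. simpl; ring. rewrite tc_pow, INR_IPR; reflexivity.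
  rewrite tc_inv, tc_pow, INR_IPR. change (IZR (Zneg p)) with (- IPR p). ring. Qed.

Lemma gen_pow X g n : gen X g -> gen X (osc_pow g n).
Proof. intro H; induction n; simpl. constructor. apply gen_mul; auto. Qed.

Lemma gen_zpow X g k : gen X g -> gen X (osc_zpow g k).
Proof. intro H; destruct k; simpl. constructor. apply gen_pow; auto. apply gen_inv, gen_pow; auto. Qed.

Lemma gen_mono (X Y : Osc -> Prop) g : (forall x, X x -> Y x) -> gen X g -> gen Y g.
Proof. intros HXY H; induction H. constructor. apply gen_base; auto. apply gen_mul; auto. apply gen_inv; auto. Qed.

Lemma gen_sub (X L : Osc -> Prop) g : subgroup L -> (forall x, X x -> L x) -> gen X g -> L g.
Proof. intros [H1 [H2 H3]] HX H; induction H; auto. Qed.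

Lemma gen_F c s X g : in_SO2 c s -> gen X g -> gen (fun y => exists x, X x /\ y = F_S c s x) (F_S c s g).
Proof.
  intros Hc H; induction H.
  - rewrite F_id; constructor.
  - apply gen_base; eauto.
  - rewrite F_mul by auto; apply gen_mul; auto.
  - rewrite F_inv; apply gen_inv; auto.
Qed.

Lemma image_sub c s L : in_SO2 c s -> subgroup L -> subgroup (image_FS c s L).
Proof.
  intros Hc [H1 [H2 H3]]; unfold image_FS; split; [|split].
  - exists osc_id; split; auto; rewrite F_id; auto.
  - intros g h [g' [Hg ->]] [h' [Hh ->]]. exists (osc_mul g' h'); split; auto. rewrite F_mul; auto.
  - intros g [g' [Hg ->]]. exists (osc_inv g'); split; auto. rewrite F_inv; auto.
Qed.

Lemma zpow0 g k : tc g = 0 -> osc_zpow g k = mkOsc (IZR k * xr g) (IZR k * xim g) (IZR k * zc g) 0.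
Proof.
  intro H. destruct k as [|p|p]; simpl.
  - unfold osc_id; f_equal; ring.
  - rewrite pow0 by exact H. rewrite INR_IPR. reflexivity.
  - rewrite pow0 by exact H. rewrite inv0 by reflexivity. cbn [xr xim zc tc]. rewrite INR_IPR.
    change (IZR (Zneg p)) with (- IPR p). f_equal; ring.
Qed.


Lemma period_Z x k : cos (x + 2 * PI * IZR k) = cos x /\ sin (x + 2 * PI * IZR k) = sin x.
Proof.
  destruct k as [|p|p].
  - simpl. rewrite Rmult_0_r, Rplus_0_r. auto.
  - change (IZR (Zpos p)) with (IPR p). rewrite <- INR_IPR.
    replace (x + 2 * PI * INR (Pos.to_nat p)) with (x + 2 * INR (Pos.to_nat p) * PI) by ring.
    rewrite cos_period, sin_period; auto.
  - change (IZR (Zneg p)) with (- IPR p). rewrite <- INR_IPR.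
    pose proof (cos_period (x + 2 * PI * - INR (Pos.to_nat p)) (Pos.to_nat p)) as H1.
    pose proof (sin_period (x + 2 * PI * - INR (Pos.to_nat p)) (Pos.to_nat p)) as H2.
    replace (x + 2 * PI * - INR (Pos.to_nat p) + 2 * INR (Pos.to_nat p) * PI) with x in H1, H2 by ring.
    split; symmetry; assumption.
Qed.

Lemma conv n j k m : INR n * (PI * IZR j / 6 + 2 * PI * IZR k) = 2 * PI * IZR m ->
  (Z.of_nat n * (j + 12 * k) = 12 * m)%Z.
Proof.
  intro H. pose proof PI_RGT_0.
  assert (H2 : INR n * (IZR j + 12 * IZR k) = 12 * IZR m).
  { apply (Rmult_eq_reg_l (PI / 6)). 2: lra. rewrite <- (Rmult_1_r (2 * PI * IZR m)) in H.
    lra. }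
  apply eq_IZR. rewrite mult_IZR, plus_IZR, mult_IZR, mult_IZR, <- INR_IZR_INZ. exact H2.
Qed.

Lemma conv' n j k m : (Z.of_nat n * (j + 12 * k) = 12 * m)%Z ->
  in_2piZ (INR n * (PI * IZR j / 6 + 2 * PI * IZR k)).
Proof.
  intro H. exists m. apply (f_equal IZR) in H.
  rewrite mult_IZR, plus_IZR, mult_IZR, mult_IZR, <- INR_IZR_INZ in H.
  replace (INR n * (PI * IZR j / 6 + 2 * PI * IZR k)) with (PI / 6 * (INR n * (IZR j + 12 * IZR k))) by field.
  rewrite H. field.
Qed.

Lemma ord_cases l q : lambda_set l -> is_ord l q ->
 (q = 1%nat /\ cos l = 1 /\ sin l = 0) \/ (q = 2%nat /\ cos l = -1 /\ sin l = 0) \/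
 (q = 3%nat /\ cos l = -1/2 /\ sin l = sqrt 3/2) \/ (q = 4%nat /\ cos l = 0 /\ sin l = 1) \/
 (q = 6%nat /\ cos l = 1/2 /\ sin l = sqrt 3/2).
Proof.
  intros Hl [Hq1 [Hq2 Hq3]].
  destruct Hl as [[n [Hn ->]] | [l0 [k [Hl0 ->]]]].
  - destruct (Nat.Even_or_Odd n) as [[m Hm] | [m Hm]]; subst n.
    + left.
      assert (E : INR (2 * m) * PI = 0 + 2 * INR m * PI) by (rewrite mult_INR; simpl; ring).
      rewrite E, cos_period, sin_period, cos_0, sin_0. split; auto.
      destruct (le_lt_dec q 1); [lia|]. exfalso. apply (Hq3 1%nat); auto.
      exists (Z.of_nat m). rewrite <- INR_IZR_INZ, mult_INR. simpl. ring.
    + right; left.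
      assert (E : INR (2 * m + 1) * PI = PI + 2 * INR m * PI) by (rewrite plus_INR, mult_INR; simpl; ring).
      rewrite E, cos_period, sin_period, cos_PI, sin_PI. split; auto.
      destruct (le_lt_dec q 2).
      * destruct (Nat.eq_dec q 2); auto. assert (q = 1%nat) by lia. subst q.
        exfalso. destruct Hq2 as [z Hz]. rewrite Rmult_1_l in Hz.
        rewrite plus_INR, mult_INR in Hz. simpl INR in Hz.
        assert (H3 : 2 * INR m + 1 = 2 * IZR z).
        { apply (Rmult_eq_reg_r PI). lra. pose proof PI_RGT_0; lra. }
        rewrite INR_IZR_INZ in H3. assert (H4 : IZR (2 * Z.of_nat m + 1) = IZR (2 * z)).
        { rewrite plus_IZR, !mult_IZR. simpl. lra. }
        apply eq_IZR in H4. lia.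
      * exfalso. apply (Hq3 2%nat); auto. exists (Z.of_nat (2*m+1)).
        rewrite <- INR_IZR_INZ. simpl INR at 1. ring.
  - pose proof PI_RGT_0.
    destruct Hl0 as [ -> | [ -> | ->]].
    + assert (E : PI / 3 = PI * IZR 2 / 6) by (simpl; field). rewrite E in *.
      assert (Hin : in_2piZ (INR 6 * (PI * IZR 2 / 6 + 2 * PI * IZR k))) by (apply conv' with (m := (1 + 6*k)%Z); lia).
      assert (q <= 6)%nat by (destruct (le_lt_dec q 6); auto; exfalso; apply (Hq3 6%nat); auto; lia).
      destruct Hq2 as [m Hm]. apply conv in Hm.
      assert (q = 1 \/ q = 2 \/ q = 3 \/ q = 4 \/ q = 5 \/ q = 6)%nat as Hc by lia.
      destruct Hc as [ ->|[ ->|[ ->|[ ->|[ ->| ->]]]]]; simpl Z.of_nat in Hm; try lia.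
      do 4 right. split; auto.
      replace (PI * IZR 2 / 6) with (PI / 3) by (simpl; field).
      rewrite (proj1 (period_Z _ _)), (proj2 (period_Z _ _)), cos_PI3, sin_PI3; auto.
    + assert (E : PI / 2 = PI * IZR 3 / 6) by (simpl; field). rewrite E in *.
      assert (Hin : in_2piZ (INR 4 * (PI * IZR 3 / 6 + 2 * PI * IZR k))) by (apply conv' with (m := (1 + 4*k)%Z); lia).
      assert (q <= 4)%nat by (destruct (le_lt_dec q 4); auto; exfalso; apply (Hq3 4%nat); auto; lia).
      destruct Hq2 as [m Hm]. apply conv in Hm.
      assert (q = 1 \/ q = 2 \/ q = 3 \/ q = 4)%nat as Hc by lia.
      destruct Hc as [ ->|[ ->|[ ->| ->]]]; simpl Z.of_nat in Hm; try lia.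
      do 3 right; left. split; auto.
      replace (PI * IZR 3 / 6) with (PI / 2) by (simpl; field).
      rewrite (proj1 (period_Z _ _)), (proj2 (period_Z _ _)), cos_PI2, sin_PI2; auto.
    + assert (E : 2 * PI / 3 = PI * IZR 4 / 6) by (simpl; field). rewrite E in *.
      assert (Hin : in_2piZ (INR 3 * (PI * IZR 4 / 6 + 2 * PI * IZR k))) by (apply conv' with (m := (1 + 3*k)%Z); lia).
      assert (q <= 3)%nat by (destruct (le_lt_dec q 3); auto; exfalso; apply (Hq3 3%nat); auto; lia).
      destruct Hq2 as [m Hm]. apply conv in Hm.
      assert (q = 1 \/ q = 2 \/ q = 3)%nat as Hc by lia.
      destruct Hc as [ ->|[ ->| ->]]; simpl Z.of_nat in Hm; try lia.
      do 2 right; left. split; auto.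
      replace (PI * IZR 4 / 6) with (2 * (PI / 3)) by (simpl; field).
      rewrite (proj1 (period_Z _ _)), (proj2 (period_Z _ _)), cos_2PI3, sin_2a, cos_PI3, sin_PI3.
      split; field.
Qed.


Definition cmb (a b : Z) (x y : R) : R := IZR a * x + IZR b * y.

Lemma list_min {A} (f : A -> R) (l : list A) (a : A) :
  exists m, In m (a :: l) /\ forall y, In y (a :: l) -> f m <= f y.
Proof.
  revert a. induction l as [|b l IH]; intro a.
  - exists a. split; [left; auto|]. intros y [<-|[]]. lra.
  - destruct (IH b) as [m [Hm Hmin]].
    destruct (Rle_dec (f a) (f m)).
    + exists a. split; [left; auto|]. intros y [<-|Hy]. lra. specialize (Hmin y Hy). lra.
    + exists m. split; [right; auto|]. intros y [<-|Hy]. lra. auto.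
Qed.

Definition box (N : Z) : list Z := map (fun n => (Z.of_nat n - N)%Z) (seq 0 (Z.to_nat (2*N+1))).

Lemma in_box a N : (- N <= a <= N)%Z -> In a (box N).
Proof.
  intro H. unfold box. apply in_map_iff. exists (Z.to_nat (a + N)). split.
  - rewrite Z2Nat.id by lia. lia.
  - apply in_seq. lia.
Qed.

Lemma lagr x1 y1 x2 y2 : (x1 * y2 - y1 * x2) ^ 2 <= (x1^2 + y1^2) * (x2^2 + y2^2).
Proof.
  replace ((x1^2 + y1^2) * (x2^2 + y2^2)) with ((x1 * y2 - y1 * x2) ^ 2 + (x1*x2 + y1*y2)^2) by ring.
  pose proof (pow2_ge_0 (x1*x2 + y1*y2)). lra.
Qed.

Section Red.
Variables u1 u2 v1 v2 : R.
Hypothesis HD : (u1*v2 - u2*v1)^2 = 1.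
Let D := u1*v2 - u2*v1.
Definition Q (a b : Z) := cmb a b u1 v1 ^ 2 + cmb a b u2 v2 ^ 2.

Lemma Q_ge0 a b : 0 <= Q a b.
Proof. unfold Q. pose proof (pow2_ge_0 (cmb a b u1 v1)). pose proof (pow2_ge_0 (cmb a b u2 v2)). lra. Qed.

Lemma bound a b : Q a b <= u1^2 + u2^2 ->
  IZR a ^ 2 <= (u1^2+u2^2)*(v1^2+v2^2) /\ IZR b ^2 <= (u1^2+u2^2)*(u1^2+u2^2).
Proof.
  intro H. unfold Q in H.
  set (w1 := cmb a b u1 v1) in *. set (w2 := cmb a b u2 v2) in *.
  assert (E1 : w1 * v2 - w2 * v1 = IZR a * (u1*v2 - u2*v1)) by (unfold w1, w2, cmb; ring).
  assert (E2 : u1 * w2 - u2 * w1 = IZR b * (u1*v2 - u2*v1)) by (unfold w1, w2, cmb; ring).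
  pose proof (lagr w1 w2 v1 v2) as L1. pose proof (lagr u1 u2 w1 w2) as L2.
  rewrite E1 in L1. rewrite E2 in L2.
  replace ((IZR a * (u1 * v2 - u2 * v1)) ^ 2) with (IZR a ^2 * (u1 * v2 - u2 * v1) ^ 2) in L1 by ring.
  replace ((IZR b * (u1 * v2 - u2 * v1)) ^ 2) with (IZR b ^2 * (u1 * v2 - u2 * v1) ^ 2) in L2 by ring.
  rewrite HD in L1, L2.
  pose proof (pow2_ge_0 v1). pose proof (pow2_ge_0 v2). pose proof (pow2_ge_0 u1). pose proof (pow2_ge_0 u2).
  split; nra.
Qed.

Definition nzb (p : Z * Z) : bool := negb (Z.eqb (fst p) 0 && Z.eqb (snd p) 0).

Lemma shortest : exists a b : Z, (a <> 0 \/ b <> 0)%Z /\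
  forall a' b', (a' <> 0 \/ b' <> 0)%Z -> Q a b <= Q a' b'.
Proof.
  set (B := (u1^2+u2^2)*((u1^2+u2^2)+(v1^2+v2^2))).
  set (N := up B).
  assert (HB : 0 <= B).
  { unfold B. pose proof (pow2_ge_0 v1). pose proof (pow2_ge_0 v2). pose proof (pow2_ge_0 u1). pose proof (pow2_ge_0 u2). nra. }
  assert (HN : B < IZR N) by (apply archimed).
  assert (Hbox : forall a b, Q a b <= u1^2 + u2^2 -> (- N <= a <= N)%Z /\ (- N <= b <= N)%Z).
  { intros a b Hq. destruct (bound a b Hq) as [Ha Hb].
    assert (Ha' : IZR (a*a) < IZR N).
    { rewrite mult_IZR. unfold B in HN. pose proof (pow2_ge_0 v1). pose proof (pow2_ge_0 v2). pose proof (pow2_ge_0 u1). pose proof (pow2_ge_0 u2). nra. }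
    assert (Hb' : IZR (b*b) < IZR N).
    { rewrite mult_IZR. unfold B in HN. pose proof (pow2_ge_0 v1). pose proof (pow2_ge_0 v2). pose proof (pow2_ge_0 u1). pose proof (pow2_ge_0 u2). nra. }
    apply lt_IZR in Ha'. apply lt_IZR in Hb'. split; nia. }
  assert (HN1 : (1 <= N)%Z).
  { assert (0 < IZR N) by lra. apply lt_IZR in H. lia. }
  set (l := filter nzb (list_prod (box N) (box N))).
  assert (H10 : In (1%Z, 0%Z) l).
  { apply filter_In. split. apply in_prod; apply in_box; lia. reflexivity. }
  destruct l as [|p0 l'] eqn:El. { destruct H10. }
  destruct (list_min (fun p => Q (fst p) (snd p)) l' p0) as [[a b] [Hm Hmin]].
  rewrite <- El in Hm, Hmin, H10.
  exists a, b. split.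
  - unfold l in Hm. apply filter_In in Hm. destruct Hm as [_ Hm]. unfold nzb in Hm. simpl in Hm.
    destruct (Z.eqb_spec a 0), (Z.eqb_spec b 0); simpl in Hm; try discriminate; lia.
  - intros a' b' Hnz.
    assert (Q a b <= Q 1 0) by apply (Hmin _ H10).
    assert (HQ10 : Q 1 0 = u1^2 + u2^2) by (unfold Q, cmb; simpl; ring).
    destruct (Rle_dec (Q a' b') (u1^2 + u2^2)) as [Hle|Hgt].
    + destruct (Hbox a' b' Hle) as [Ha Hb].
      apply (Hmin (a', b')). unfold l. apply filter_In. split.
      apply in_prod; apply in_box; lia.
      unfold nzb; simpl. destruct (Z.eqb_spec a' 0), (Z.eqb_spec b' 0); simpl; auto; lia.
    + lra.
Qed.

Lemma finF p k q2 : 0 < p -> p * q2 = k^2 + 1 -> p <= q2 -> -/2 <= k/p < /2 ->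
  (0 < k/p -> p < q2) -> in_F (-(k/p)) (/p).
Proof.
  intros Hp Hl Hq Hb Hs.
  assert (E : (-(k/p))^2 + (/p)^2 = q2 / p).
  { apply (Rmult_eq_reg_l (p*p)). 2: nra.
    replace (p * p * ((- (k / p)) ^ 2 + (/ p) ^ 2)) with (k^2 + 1) by (field; lra).
    rewrite <- Hl. field. lra. }
  assert (Hi : 0 < / p) by (apply Rinv_0_lt_compat; lra).
  assert (Eq : q2 / p = 1 + (q2 - p) / p) by (field; lra).
  assert (Hqp : 1 <= q2 / p) by (rewrite Eq; assert (0 <= (q2 - p) / p) by (unfold Rdiv; apply Rmult_le_pos; [lra | left; apply Rinv_0_lt_compat; lra]); lra).
  unfold in_F. rewrite E.
  destruct (Rle_dec (k/p) 0).
  - left. split; [lra|split; [lra|lra]].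
  - right. assert (1 < q2 / p) by (rewrite Eq; assert (0 < (q2 - p) / p) by (apply Rdiv_lt_0_compat; lra); lra).
    split; [lra|split; [lra|lra]].
Qed.

Lemma cmb_det a b c d : cmb a b u1 v1 * cmb c d u2 v2 - cmb a b u2 v2 * cmb c d u1 v1 =
   IZR (a*d - c*b) * (u1*v2 - u2*v1).
Proof. unfold cmb. rewrite minus_IZR, !mult_IZR. ring. Qed.

Lemma reduce : exists a1 b1 a2 b2 : Z,
   let x1 := cmb a1 b1 u1 v1 in let y1 := cmb a1 b1 u2 v2 in
   let x2 := cmb a2 b2 u1 v1 in let y2 := cmb a2 b2 u2 v2 in
   let p := x1^2 + y1^2 in let k := x1*x2 + y1*y2 in
   x1*y2 - y1*x2 = 1 /\ ((a1*b2 - a2*b1 = 1)%Z \/ (a1*b2 - a2*b1 = -1)%Z) /\ 0 < p /\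
   in_F (- (k/p)) (/p).
Proof.
  destruct shortest as [a [b [Hnz Hmin]]].
  assert (HD' : D ^ 2 = 1) by exact HD.
  set (x1 := cmb a b u1 v1). set (y1 := cmb a b u2 v2).
  assert (Epq : Q a b = x1^2 + y1^2) by reflexivity.
  set (p := x1^2 + y1^2).
  assert (Hp : 0 < p).
  { destruct (Q_ge0 a b) as [H|H]; [rewrite Epq in H; exact H|]. exfalso. rewrite Epq in H.
    assert (Hx : x1 = 0) by (pose proof (pow2_ge_0 x1); pose proof (pow2_ge_0 y1); nra).
    assert (Hy : y1 = 0) by (pose proof (pow2_ge_0 x1); pose proof (pow2_ge_0 y1); nra).
    assert (E1 : x1 * v2 - y1 * v1 = IZR a * D) by (unfold x1, y1, cmb, D; ring).
    assert (E2 : u1 * y1 - u2 * x1 = IZR b * D) by (unfold x1, y1, cmb, D; ring).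
    rewrite Hx, Hy in E1, E2.
    assert (IZR a = 0) by nra. assert (IZR b = 0) by nra.
    apply eq_IZR in H0. apply eq_IZR in H1. lia. }
  assert (Hg : Z.gcd a b = 1%Z).
  { pose proof (Z.gcd_nonneg a b). destruct (Z.gcd_divide_l a b) as [a' Ha'].
    destruct (Z.gcd_divide_r a b) as [b' Hb'].
    assert (Hg0 : Z.gcd a b <> 0%Z) by (rewrite Z.gcd_eq_0; lia).
    set (g := Z.gcd a b) in *.
    destruct (Z.eq_dec g 1); auto. exfalso. assert (H2 : (2 <= g)%Z) by lia.
    assert (Hnz' : (a' <> 0 \/ b' <> 0)%Z) by (destruct Hnz; [left|right]; intro Hz; rewrite Hz in *; lia).
    specialize (Hmin a' b' Hnz').
    assert (EQ : Q a b = IZR g ^ 2 * Q a' b') by (rewrite Ha', Hb'; unfold Q, cmb; rewrite !mult_IZR; ring).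
    apply IZR_le in H2. rewrite Epq in EQ. fold p in EQ.
    pose proof (Q_ge0 a' b'). rewrite Epq in Hmin. fold p in Hmin. set (Q' := Q a' b') in *. assert (0 < Q') by nra. assert (4 <= IZR g ^ 2) by nra. nra. }
  pose proof (Zgcd_is_gcd a b) as Hgcd. rewrite Hg in Hgcd.
  destruct (Zis_gcd_bezout a b 1 Hgcd) as [u0 v0 Huv].
  assert (Hs : exists sg : Z, IZR sg = D /\ (sg = 1 \/ sg = -1)%Z).
  { assert (Hd : (D - 1) * (D + 1) = 0) by nra.
    apply Rmult_integral in Hd. destruct Hd.
    - exists 1%Z. split; [simpl; lra|auto].
    - exists (-1)%Z. split; [simpl; lra|auto]. }
  destruct Hs as [sg [Hsg Hsg1]].
  set (c0 := (-(v0*sg))%Z). set (d0 := (u0*sg)%Z).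
  assert (He0 : (a*d0 - c0*b = sg)%Z).
  { unfold c0, d0. replace (a * (u0 * sg) - - (v0 * sg) * b)%Z with (sg * (u0*a+v0*b))%Z by ring.
    rewrite Huv. ring. }
  set (t := (x1 * cmb c0 d0 u1 v1 + y1 * cmb c0 d0 u2 v2) / p).
  destruct (archimed (t + /2)) as [Hup1 Hup2].
  set (K := (1 - up (t + /2))%Z).
  set (a2 := (c0 + K*a)%Z). set (b2 := (d0 + K*b)%Z).
  set (x2 := cmb a2 b2 u1 v1). set (y2 := cmb a2 b2 u2 v2).
  assert (Ex2 : x2 = cmb c0 d0 u1 v1 + IZR K * x1) by (unfold x2, x1, a2, b2, cmb; rewrite !plus_IZR, !mult_IZR; ring).
  assert (Ey2 : y2 = cmb c0 d0 u2 v2 + IZR K * y1) by (unfold y2, y1, a2, b2, cmb; rewrite !plus_IZR, !mult_IZR; ring).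
  set (k := x1 * x2 + y1 * y2).
  assert (Ek : k / p = t + IZR K).
  { unfold k, t. rewrite Ex2, Ey2. assert (Hp' : x1^2+y1^2 <> 0) by (unfold p in Hp; lra). unfold p. field. exact Hp'. }
  assert (HK : IZR K = 1 - IZR (up (t + /2))) by (unfold K; rewrite minus_IZR; reflexivity).
  assert (Hb1 : -/2 <= k/p < /2) by (rewrite Ek, HK; lra).
  assert (He : (a*b2 - a2*b = sg)%Z) by (unfold a2, b2; rewrite <- He0; ring).
  assert (Hdet : x1 * y2 - y1 * x2 = 1).
  { unfold x1, y1, x2, y2. rewrite cmb_det, He, Hsg. fold D. rewrite <- HD'. ring. }
  assert (Hnz2 : (a2 <> 0 \/ b2 <> 0)%Z).
  { destruct (Z.eq_dec a2 0); destruct (Z.eq_dec b2 0); try lia. }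
  set (q2 := x2^2 + y2^2).
  assert (Hq2 : p <= q2) by (pose proof (Hmin a2 b2 Hnz2) as H; unfold Q in H; exact H).
  assert (Hlag : p * q2 = k^2 + 1).
  { transitivity (k^2 + (x1*y2-y1*x2)^2). unfold p, q2, k; ring. rewrite Hdet; ring. }
  destruct (Rlt_dec p q2) as [Hlt|Hnlt].
  - exists a, b, a2, b2. cbv zeta. fold x1 y1 x2 y2 p k.
    split; [exact Hdet|split; [rewrite He; lia|split; [exact Hp|]]].
    apply (finF p k q2); auto.
  - assert (Hpq : q2 = p) by lra.
    destruct (Rle_dec (k/p) 0) as [Hle|Hgt].
    + exists a, b, a2, b2. cbv zeta. fold x1 y1 x2 y2 p k.
      split; [exact Hdet|split; [rewrite He; lia|split; [exact Hp|]]].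
      apply (finF p k q2); auto; intro; lra.
    + exists a2, b2, (-a)%Z, (-b)%Z. cbv zeta. fold x2 y2.
      assert (Ea : cmb (-a) (-b) u1 v1 = - x1) by (unfold x1, cmb; rewrite !opp_IZR; ring).
      assert (Eb : cmb (-a) (-b) u2 v2 = - y1) by (unfold y1, cmb; rewrite !opp_IZR; ring).
      rewrite Ea, Eb. fold q2.
      assert (Ek' : x2 * - x1 + y2 * - y1 = - k) by (unfold k; ring).
      rewrite Ek'.
      split; [lra|split; [lia|split; [lra|]]].
      replace (- k / q2) with (- (k / p)) by (rewrite Hpq; field; lra).
      replace (/ q2) with (/ p) by (rewrite Hpq; reflexivity).
      replace (- - (k / p)) with (k / p) by ring.
      assert (Hfin : in_F (- (- (k / p))) (/ p)).
      { replace (- (k / p)) with ((-k) / p) by (field; lra).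
        apply (finF p (-k) p); auto.
        - rewrite <- Hpq at 2. rewrite Hlag. ring.
        - lra.
        - replace (-k/p) with (-(k/p)) by (field; lra). lra.
        - replace (-k/p) with (-(k/p)) by (field; lra). intro; lra. }
      replace (- - (k / p)) with (k / p) in Hfin by ring. exact Hfin.
Qed.

End Red.


Lemma hm r a b c a' b' c' : heis_mul r (a,b,c) (a',b',c') = ((a+a')%Z, (b+b')%Z, (c+c'+r*a*b')%Z).
Proof. reflexivity. Qed.

Lemma zind (S : Z -> Prop) : S 0%Z -> (forall k, S k -> S (k+1)%Z) -> (forall k, S k -> S (k-1)%Z) -> forall k, S k.
Proof. intros H0 H1 H2. apply Z.peano_ind; auto. Qed.

Lemma teq (a b c a' b' c' : Z) : a = a' -> b = b' -> c = c' -> (a,b,c) = (a',b',c').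
Proof. intros -> -> ->; reflexivity. Qed.

Section Gen.
Variable r : Z.
Variable phi : Z*Z*Z -> Osc.
Variable X : Osc -> Prop.
Hypothesis Hhom : forall x y, phi (heis_mul r x y) = osc_mul (phi x) (phi y).
Hypothesis Hinv : forall a b c, phi ((-a)%Z, (-b)%Z, (-c + r*a*b)%Z) = osc_inv (phi (a,b,c)).
Hypothesis H0 : phi (0%Z,0%Z,0%Z) = osc_id.
Variables a1 b1 a2 b2 eps : Z.
Hypothesis He : (a1*b2 - a2*b1 = 1)%Z \/ (a1*b2 - a2*b1 = -1)%Z.
Hypothesis Heps : eps = 1%Z \/ eps = (-1)%Z.
Hypothesis HX1 : gen X (phi (a1,b1,0%Z)).
Hypothesis HX2 : gen X (phi (a2,b2,0%Z)).
Hypothesis HX3 : gen X (phi (0%Z,0%Z,eps)).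

Let P x := gen X (phi x).

Lemma Pmul a b c a' b' c' : P (a,b,c) -> P (a',b',c') -> P ((a+a')%Z, (b+b')%Z, (c+c'+r*a*b')%Z).
Proof. unfold P; intros. rewrite <- hm, Hhom. apply gen_mul; auto. Qed.

Lemma Pinv a b c : P (a,b,c) -> P ((-a)%Z, (-b)%Z, (-c + r*a*b)%Z).
Proof. unfold P; intros. rewrite Hinv. apply gen_inv; auto. Qed.

Lemma Peq x y : x = y -> P x -> P y.
Proof. intros ->; auto. Qed.

Lemma Pcent : forall k, P (0%Z,0%Z,k).
Proof.
  assert (Hm : forall j, P (0%Z, 0%Z, (j*eps)%Z)).
  { apply zind.
    - cbv beta. rewrite Z.mul_0_l. unfold P. rewrite H0. constructor.
    - intros k Hk. eapply Peq; [|apply (Pmul _ _ _ _ _ _ Hk HX3)]. apply teq; ring.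
    - intros k Hk. pose proof (Pinv _ _ _ HX3) as Hi.
      eapply Peq; [|apply (Pmul _ _ _ _ _ _ Hk Hi)]. apply teq; ring. }
  intro k. eapply Peq; [|apply (Hm (k*eps)%Z)]. f_equal. destruct Heps; subst; ring.
Qed.

Lemma Pshift a b c c' : P (a,b,c) -> P (a,b,c').
Proof.
  intro H. eapply Peq; [|apply (Pmul _ _ _ _ _ _ H (Pcent (c'-c)%Z))]. apply teq; ring.
Qed.

Let T a b := exists c, P (a,b,c).

Lemma Tadd a b a' b' : T a b -> T a' b' -> T (a+a')%Z (b+b')%Z.
Proof. intros [c H] [c' H']. eexists. apply (Pmul _ _ _ _ _ _ H H'). Qed.

Lemma Tneg a b : T a b -> T (-a)%Z (-b)%Z.
Proof. intros [c H]. eexists. apply (Pinv _ _ _ H). Qed.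

Lemma Teq a b a' b' : a = a' -> b = b' -> T a b -> T a' b'.
Proof. intros -> ->; auto. Qed.

Lemma Tmult a b : T a b -> forall j, T (j*a)%Z (j*b)%Z.
Proof.
  intro H. apply zind.
  - exists 0%Z. unfold P. simpl. rewrite H0. constructor.
  - intros k Hk. eapply Teq; [| |apply (Tadd _ _ _ _ Hk H)]; ring.
  - intros k Hk. eapply Teq; [| |apply (Tadd _ _ _ _ Hk (Tneg _ _ H))]; ring.
Qed.

Lemma Qall : forall x, gen X (phi x).
Proof.
  assert (T1 : T a1 b1) by (exists 0%Z; exact HX1).
  assert (T2 : T a2 b2) by (exists 0%Z; exact HX2).
  set (e := (a1*b2 - a2*b1)%Z).
  assert (Tx : T 1 0).
  { eapply Teq; [| |apply (Tadd _ _ _ _ (Tmult _ _ T1 (e*b2)%Z) (Tmult _ _ T2 (-(e*b1))%Z))].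
    - replace (e * b2 * a1 + - (e * b1) * a2)%Z with (e*e)%Z by (unfold e; ring). destruct He; unfold e; rewrite H; ring.
    - ring. }
  assert (Ty : T 0 1).
  { eapply Teq; [| |apply (Tadd _ _ _ _ (Tmult _ _ T1 (-(e*a2))%Z) (Tmult _ _ T2 (e*a1)%Z))].
    - ring.
    - replace (- (e * a2) * b1 + e * a1 * b2)%Z with (e*e)%Z by (unfold e; ring). destruct He; unfold e; rewrite H; ring. }
  intros [[a b] c].
  assert (Tab : T a b).
  { eapply Teq; [| |apply (Tadd _ _ _ _ (Tmult _ _ Tx a) (Tmult _ _ Ty b))]; ring. }
  destruct Tab as [c0 Hc0]. exact (Pshift _ _ _ _ Hc0).
Qed.
End Gen.


Lemma add_lin (f : Z -> R) : (forall a b, f (a+b)%Z = f a + f b) -> forall a, f a = IZR a * f 1%Z.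
Proof.
  intro H. assert (H0 : f 0%Z = 0) by (pose proof (H 0%Z 0%Z) as E; simpl in E; lra).
  apply zind.
  - rewrite H0. simpl; ring.
  - intros k Hk. rewrite H, Hk, plus_IZR. simpl. ring.
  - intros k Hk. assert (E := H (k-1)%Z 1%Z). replace (k-1+1)%Z with k in E by ring.
    rewrite minus_IZR. simpl. lra.
Qed.

Section Phi.
Variable L : Osc -> Prop.
Variable r : nat.
Variable phi : Z*Z*Z -> Osc.
Hypothesis Hr : (0 < r)%nat.
Hypothesis Hhom : forall x y, phi (heis_mul (Z.of_nat r) x y) = osc_mul (phi x) (phi y).
Hypothesis Hrange : forall g, inH L g <-> exists x, phi x = g.
Let Rz := Z.of_nat r.

Lemma ph_inH x : inH L (phi x).
Proof. apply Hrange. eauto. Qed.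
Lemma ph_tc x : tc (phi x) = 0.
Proof. apply ph_inH. Qed.
Lemma ph_L x : L (phi x).
Proof. apply ph_inH. Qed.

Lemma ph_mul a b c a' b' c' : phi ((a+a')%Z, (b+b')%Z, (c+c'+Rz*a*b')%Z) = osc_mul (phi (a,b,c)) (phi (a',b',c')).
Proof. rewrite <- hm. apply Hhom. Qed.

Lemma ph_eq x y : x = y -> phi x = phi y.
Proof. intros ->; auto. Qed.

Lemma ph0 : phi (0%Z,0%Z,0%Z) = osc_id.
Proof.
  assert (H : phi (0%Z,0%Z,0%Z) = osc_mul (phi (0%Z,0%Z,0%Z)) (phi (0%Z,0%Z,0%Z))).
  { rewrite <- ph_mul. apply ph_eq, teq; ring. }
  rewrite mul0 in H by apply ph_tc.
  set (g := phi (0%Z,0%Z,0%Z)) in *.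
  assert (E1 := f_equal xr H). assert (E2 := f_equal xim H). assert (E3 := f_equal zc H).
  simpl in E1, E2, E3.
  assert (xr g = 0) by lra. assert (xim g = 0) by lra.
  rewrite H0, H1 in E3. assert (zc g = 0) by lra.
  assert (H4 : tc g = 0) by apply ph_tc. rewrite (osc_eta g), H0, H1, H2, H4. reflexivity.
Qed.

Lemma ph_inv a b c : phi ((-a)%Z, (-b)%Z, (-c + Rz*a*b)%Z) = osc_inv (phi (a,b,c)).
Proof.
  assert (H : osc_mul (phi (a,b,c)) (phi ((-a)%Z, (-b)%Z, (-c + Rz*a*b)%Z)) = osc_id).
  { rewrite <- ph_mul, <- ph0. apply ph_eq, teq; ring. }
  rewrite mul0 in H by apply ph_tc.
  rewrite inv0 by apply ph_tc.
  set (g := phi (a,b,c)) in *. set (h := phi ((-a)%Z, (-b)%Z, (-c + Rz*a*b)%Z)) in *.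
  assert (E1 := f_equal xr H). assert (E2 := f_equal xim H). assert (E3 := f_equal zc H).
  simpl in E1, E2, E3.
  assert (H1 : xr h = - xr g) by lra. assert (H2 : xim h = - xim g) by lra.
  rewrite H1, H2 in E3.
  assert (H3 : zc h = - zc g) by lra.
  assert (H4 : tc h = 0) by apply ph_tc. rewrite (osc_eta h), H1, H2, H3, H4. reflexivity.
Qed.

Lemma ph_lin (pr : Osc -> R) (Hpr : forall g h, tc g = 0 -> pr (osc_mul g h) = pr g + pr h) :
  forall a b c, pr (phi (a,b,c)) = IZR a * pr (phi (1%Z,0%Z,0%Z)) + IZR b * pr (phi (0%Z,1%Z,0%Z)).
Proof.
  assert (Hadd : forall a b c a' b' c', pr (phi ((a+a')%Z, (b+b')%Z, (c+c'+Rz*a*b')%Z)) = pr (phi (a,b,c)) + pr (phi (a',b',c'))).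
  { intros. rewrite ph_mul. apply Hpr, ph_tc. }
  assert (HA : forall a, pr (phi (a,0%Z,0%Z)) = IZR a * pr (phi (1%Z,0%Z,0%Z))).
  { apply (add_lin (fun a => pr (phi (a,0%Z,0%Z)))). intros a b.
    rewrite <- Hadd. f_equal. apply ph_eq, teq; ring. }
  assert (HB : forall b, pr (phi (0%Z,b,0%Z)) = IZR b * pr (phi (0%Z,1%Z,0%Z))).
  { apply (add_lin (fun b => pr (phi (0%Z,b,0%Z)))). intros a b.
    rewrite <- Hadd. f_equal. apply ph_eq, teq; ring. }
  assert (HC : forall c, pr (phi (0%Z,0%Z,c)) = IZR c * pr (phi (0%Z,0%Z,1%Z))).
  { apply (add_lin (fun c => pr (phi (0%Z,0%Z,c)))). intros a b.
    rewrite <- Hadd. f_equal. apply ph_eq, teq; ring. }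
  assert (HC1 : pr (phi (0%Z,0%Z,1%Z)) = 0).
  { assert (E1 : pr (phi (1%Z,1%Z,Rz)) = pr (phi (1%Z,0%Z,0%Z)) + pr (phi (0%Z,1%Z,0%Z))).
    { rewrite <- Hadd. f_equal. apply ph_eq, teq; ring. }
    assert (E2 : pr (phi (1%Z,1%Z,Rz)) = pr (phi (1%Z,1%Z,0%Z)) + pr (phi (0%Z,0%Z,Rz))).
    { rewrite <- Hadd. f_equal. apply ph_eq, teq; ring. }
    assert (E3 : pr (phi (1%Z,1%Z,0%Z)) = pr (phi (0%Z,1%Z,0%Z)) + pr (phi (1%Z,0%Z,0%Z))).
    { rewrite <- Hadd. f_equal. apply ph_eq, teq; ring. }
    rewrite HC in E2. assert (IZR Rz > 0) by (unfold Rz; rewrite <- INR_IZR_INZ; apply lt_0_INR; auto).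
    nra. }
  intros a b c.
  assert (E : pr (phi (a,b,c)) = pr (phi (a,0%Z,0%Z)) + pr (phi (0%Z,b,(c - Rz*a*b)%Z))).
  { rewrite <- Hadd. f_equal. apply ph_eq, teq; ring. }
  assert (E' : pr (phi (0%Z,b,(c - Rz*a*b)%Z)) = pr (phi (0%Z,b,0%Z)) + pr (phi (0%Z,0%Z,(c - Rz*a*b)%Z))).
  { rewrite <- Hadd. f_equal. apply ph_eq, teq; ring. }
  rewrite E, E', HA, HB, HC, HC1. ring.
Qed.

Definition U1 := xr (phi (1%Z,0%Z,0%Z)).
Definition U2 := xim (phi (1%Z,0%Z,0%Z)).
Definition V1 := xr (phi (0%Z,1%Z,0%Z)).
Definition V2 := xim (phi (0%Z,1%Z,0%Z)).

Lemma ph_xr a b c : xr (phi (a,b,c)) = cmb a b U1 V1.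
Proof. apply ph_lin. intros g h Hg. rewrite mul0 by auto. reflexivity. Qed.
Lemma ph_xim a b c : xim (phi (a,b,c)) = cmb a b U2 V2.
Proof. apply ph_lin. intros g h Hg. rewrite mul0 by auto. reflexivity. Qed.

Definition z0 := zc (phi (0%Z,0%Z,1%Z)).

Lemma ph_zc c : zc (phi (0%Z,0%Z,c)) = IZR c * z0.
Proof.
  apply (add_lin (fun c => zc (phi (0%Z,0%Z,c)))). intros a b.
  rewrite (ph_eq (0%Z,0%Z,(a+b)%Z) ((0+0)%Z, (0+0)%Z, (a+b+Rz*0*0)%Z)) by (apply teq; ring).
  rewrite ph_mul, mul0 by apply ph_tc. simpl. rewrite !ph_xr, !ph_xim. unfold cmb. simpl. ring.
Qed.

Lemma ph_comm : INR r * z0 = U1 * V2 - U2 * V1.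
Proof.
  assert (E1 : phi (1%Z,1%Z,Rz) = osc_mul (phi (1%Z,0%Z,0%Z)) (phi (0%Z,1%Z,0%Z))).
  { rewrite <- ph_mul. apply ph_eq, teq; ring. }
  assert (E2 : phi (1%Z,1%Z,Rz) = osc_mul (phi (1%Z,1%Z,0%Z)) (phi (0%Z,0%Z,Rz))).
  { rewrite <- ph_mul. apply ph_eq, teq; ring. }
  assert (E3 : phi (1%Z,1%Z,0%Z) = osc_mul (phi (0%Z,1%Z,0%Z)) (phi (1%Z,0%Z,0%Z))).
  { rewrite <- ph_mul. apply ph_eq, teq; ring. }
  rewrite mul0 in E1, E2, E3 by apply ph_tc.
  apply (f_equal zc) in E1. apply (f_equal zc) in E2. apply (f_equal zc) in E3.
  simpl in E1, E2, E3. rewrite ph_zc in E2. rewrite E3 in E2.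
  rewrite !ph_xr, !ph_xim in E2. unfold cmb in E2. simpl in E2.
  fold U1 U2 V1 V2 in E1, E2.
  assert (HR : IZR Rz = INR r) by (unfold Rz; rewrite INR_IZR_INZ; reflexivity).
  rewrite HR in E2. lra.
Qed.

End Phi.


Section Phi2.
Variable L : Osc -> Prop.
Variable r : nat.
Variable phi : Z*Z*Z -> Osc.
Hypothesis Hr : (0 < r)%nat.
Hypothesis Hhom : forall x y, phi (heis_mul (Z.of_nat r) x y) = osc_mul (phi x) (phi y).
Hypothesis Hrange : forall g, inH L g <-> exists x, phi x = g.

Let u1 := U1 phi. Let u2 := U2 phi. Let v1 := V1 phi. Let v2 := V2 phi.

Lemma xi_inH w1 w2 : (exists g, inH L g /\ xr g = w1 /\ xim g = w2) <->
   exists a b : Z, w1 = cmb a b u1 v1 /\ w2 = cmb a b u2 v2.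
Proof.
  split.
  - intros [g [Hg [H1 H2]]]. apply Hrange in Hg. destruct Hg as [[[a b] c] <-].
    exists a, b. rewrite <- H1, <- H2. rewrite (ph_xr L r phi Hr Hhom Hrange), (ph_xim L r phi Hr Hhom Hrange); auto.
  - intros [a [b [H1 H2]]]. exists (phi (a,b,0%Z)). split. apply (ph_inH L phi Hrange); auto.
    rewrite (ph_xr L r phi Hr Hhom Hrange), (ph_xim L r phi Hr Hhom Hrange); auto.
Qed.

Lemma norm_omega : normalised L -> (u1 * v2 - u2 * v1)^2 = 1.
Proof.
  intros [p1 [p2 [q1 [q2 [Hiff Hdet]]]]].
  assert (Hg : exists g, inH L g /\ xr g = p1 /\ xim g = p2) by (apply Hiff; exists 1%Z, 0%Z; split; simpl; ring).
  apply xi_inH in Hg. destruct Hg as [a [b [Hp1 Hp2]]].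
  assert (Hg' : exists g, inH L g /\ xr g = q1 /\ xim g = q2) by (apply Hiff; exists 0%Z, 1%Z; split; simpl; ring).
  apply xi_inH in Hg'. destruct Hg' as [a' [b' [Hq1 Hq2]]].
  destruct (proj1 (Hiff u1 u2)) as [m1 [n1 [Hu1 Hu2]]].
  { apply xi_inH. exists 1%Z, 0%Z. unfold cmb; simpl; split; ring. }
  destruct (proj1 (Hiff v1 v2)) as [m2 [n2 [Hv1 Hv2]]].
  { apply xi_inH. exists 0%Z, 1%Z. unfold cmb; simpl; split; ring. }
  set (d := p1 * q2 - p2 * q1) in *.
  set (w := u1 * v2 - u2 * v1).
  assert (Ed : d = IZR (a*b' - a'*b) * w).
  { unfold d, w. rewrite Hp1, Hp2, Hq1, Hq2. unfold cmb. rewrite minus_IZR, !mult_IZR. ring. }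
  assert (Ew : w = IZR (m1*n2 - m2*n1) * d).
  { unfold w. rewrite Hu1, Hu2, Hv1, Hv2. unfold d. rewrite minus_IZR, !mult_IZR. ring. }
  assert (Hd2 : d ^ 2 = 1).
  { rewrite <- (pow2_abs d), Hdet. ring. }
  assert (HM : IZR ((m1*n2 - m2*n1) * (a*b' - a'*b)) = 1).
  { rewrite mult_IZR. rewrite Ed in Ew. apply (Rmult_eq_reg_r w). 2: { intro H0. rewrite H0 in Ed. nra. }
    lra. }
  apply eq_IZR in HM. apply Z.eq_mul_1 in HM.
  rewrite Ew. rewrite Rpow_mult_distr, Hd2.
  destruct HM as [-> | ->]; simpl; ring.
Qed.

Lemma integ g0 : subgroup L -> L g0 -> forall a b, exists n : Z,
  sin (tc g0) * (cmb a b u1 v1 ^ 2 + cmb a b u2 v2 ^ 2) = IZR n * (u1 * v2 - u2 * v1).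
Proof.
  intros [HL1 [HL2 HL3]] Hg0 a b.
  set (h := phi (a,b,0%Z)).
  assert (Hth : tc h = 0) by (apply (ph_tc L phi Hrange); auto).
  destruct (conj_xi g0 h Hth) as [Ex [Ey Et]].
  set (x := osc_mul (osc_mul g0 h) (osc_inv g0)) in *.
  assert (Hx : inH L x).
  { split; auto. apply HL2; [apply HL2|apply HL3]; auto. apply (ph_L L phi Hrange); auto. }
  apply Hrange in Hx. destruct Hx as [[[a' b'] c'] Hx].
  rewrite <- Hx, (ph_xr L r phi Hr Hhom Hrange) in Ex by auto. rewrite <- Hx, (ph_xim L r phi Hr Hhom Hrange) in Ey by auto.
  unfold h in Ex, Ey. rewrite (ph_xr L r phi Hr Hhom Hrange), (ph_xim L r phi Hr Hhom Hrange) in Ex, Ey by auto.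
  fold u1 u2 v1 v2 in Ex, Ey.
  exists (a*b' - a'*b)%Z.
  set (X := cmb a b u1 v1) in *. set (Y := cmb a b u2 v2) in *.
  transitivity (X * cmb a' b' u2 v2 - Y * cmb a' b' u1 v1).
  - rewrite Ex, Ey. ring.
  - unfold X, Y, cmb. rewrite minus_IZR, !mult_IZR. ring.
Qed.
End Phi2.


Lemma inH_sub L : subgroup L -> subgroup (inH L).
Proof.
  intros [H1 [H2 H3]]. unfold inH. split; [|split].
  - split; auto.
  - intros g h [Hg Tg] [Hh Th]. split; auto. rewrite tc_mul, Tg, Th. ring.
  - intros g [Hg Tg]. split; auto. rewrite tc_inv, Tg. ring.
Qed.

Lemma zpow_sub L g k : subgroup L -> L g -> L (osc_zpow g k).
Proof.
  intros HL Hg. apply (gen_sub (fun x => x = g)); auto. intros x ->; auto.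
  apply gen_zpow, gen_base; auto.
Qed.

Lemma same_class_of L x y : subgroup L -> L x -> L y -> tc x = 0 -> tc y = 0 ->
  xr x = xr y -> xim x = xim y -> same_class L x y.
Proof.
  intros HL Hx Hy Tx Ty E1 E2. destruct HL as [H1 [H2 H3]].
  unfold same_class, in_center_LH, inH.
  assert (Te : tc (osc_mul (osc_inv y) x) = 0) by (rewrite tc_mul, tc_inv, Tx, Ty; ring).
  assert (Hxe : xr (osc_mul (osc_inv y) x) = 0 /\ xim (osc_mul (osc_inv y) x) = 0).
  { rewrite mul0 by (rewrite tc_inv, Ty; ring). rewrite inv0 by auto. simpl. split; lra. }
  split; [split; auto|].
  intros h _. apply central; tauto.
Qed.

Lemma cm_helper L A B X d m n : subgroup L -> L A -> L B -> L X -> L d -> tc A = 0 -> tc B = 0 -> tc X = 0 ->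
  cos (tc d) * xr X - sin (tc d) * xim X = IZR m * xr A + IZR n * xr B ->
  sin (tc d) * xr X + cos (tc d) * xim X = IZR m * xim A + IZR n * xim B ->
  same_class L (osc_mul (osc_mul d X) (osc_inv d)) (osc_mul (osc_zpow A m) (osc_zpow B n)).
Proof.
  intros HL HA HB HX Hd TA TB TX E1 E2.
  destruct (conj_xi d X TX) as [C1 [C2 C3]].
  pose proof HL as [H1 [H2 H3]].
  apply same_class_of; [exact HL| | | | | |].
  - apply H2; [apply H2|apply H3]; auto.
  - apply H2; apply zpow_sub; auto.
  - exact C3.
  - rewrite tc_mul, !tc_zpow, TA, TB. ring.
  - rewrite C1, mul0 by (rewrite tc_zpow, TA; ring). rewrite !zpow0 by auto. simpl. exact E1.
  - rewrite C2, mul0 by (rewrite tc_zpow, TA; ring). rewrite !zpow0 by auto. simpl. exact E2.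
Qed.


Theorem lemma4p17 (L : Osc -> Prop) (r : nat) (l : R) (q : nat)
  (HL : lattice L) (Hn : normalised L)
  (Hr : heis_type L r) (Hl : lambda_of L l) (Hq : is_ord l q) :
  exists c s : R, in_SO2 c s /\
  exists za zb mu nu : R, in_F mu nu /\
    let alpha := mkOsc (/ sqrt nu) 0 za 0 in
    let beta := mkOsc (- mu / sqrt nu) (sqrt nu) zb 0 in
    let gamma := mkOsc 0 0 (/ INR r) 0 in
    (exists delta, generates (image_FS c s L) alpha beta gamma delta) /\
    (q = 4%nat -> mu = 0 /\ nu = 1) /\
    ((q = 3%nat \/ q = 6%nat) -> mu = / 2 /\ nu = sqrt 3 / 2) /\
    (forall delta, image_FS c s L delta -> tc delta = l ->
       adapted (image_FS c s L) r l alpha beta gamma delta).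
Proof.
  destruct HL as [HLs _].
  destruct Hr as [Hr0 [phi [Hhom [Hinj Hrange]]]].
  destruct Hl as [Hlset Hproj].
  pose proof (ord_cases l q Hlset Hq) as Hcases.
  pose proof (norm_omega L r phi Hr0 Hhom Hrange Hn) as Hom.
  set (u1 := U1 phi) in *. set (u2 := U2 phi) in *. set (v1 := V1 phi) in *. set (v2 := V2 phi) in *.
  set (om := u1 * v2 - u2 * v1) in *.
  destruct (reduce u1 u2 v1 v2 Hom) as [a1 [b1 [a2 [b2 Hred]]]].
  cbv zeta in Hred. destruct Hred as [Hdet [He [Hp HF]]].
  set (x1 := cmb a1 b1 u1 v1) in *. set (y1 := cmb a1 b1 u2 v2) in *.
  set (x2 := cmb a2 b2 u1 v1) in *. set (y2 := cmb a2 b2 u2 v2) in *.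
  set (p := x1^2 + y1^2) in *. set (k := x1 * x2 + y1 * y2) in *.
  set (q2 := x2^2 + y2^2).
  assert (Hlag : p * q2 = k^2 + 1).
  { transitivity (k^2 + (x1*y2-y1*x2)^2). unfold p, q2, k; ring. rewrite Hdet; ring. }
  assert (Heps : exists eps : Z, IZR eps = om /\ (eps = 1 \/ eps = -1)%Z).
  { assert (Hd : (om - 1) * (om + 1) = 0) by nra.
    apply Rmult_integral in Hd. destruct Hd.
    - exists 1%Z. split; [simpl; lra|auto].
    - exists (-1)%Z. split; [simpl; lra|auto]. }
  destruct Heps as [eps [Heps Heps1]].
  assert (Hg0 : exists g0, L g0 /\ tc g0 = l).
  { apply Hproj. exists 1%Z. simpl; ring. }
  destruct Hg0 as [g0 [Hg0L Hg0t]].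
  pose proof (integ L r phi Hr0 Hhom Hrange g0 HLs Hg0L) as Hint.
  rewrite Hg0t in Hint. fold u1 u2 v1 v2 om in Hint.
  pose proof (ph_comm L r phi Hr0 Hhom Hrange) as Hcomm. fold u1 u2 v1 v2 om in Hcomm.
  set (al0 := phi (a1, b1, 0%Z)). set (be0 := phi (a2, b2, 0%Z)). set (ga0 := phi (0%Z, 0%Z, eps)).
  set (sp := sqrt p).
  assert (Hsp : 0 < sp) by (apply sqrt_lt_R0; auto).
  assert (Hsp2 : sp * sp = p) by (apply sqrt_sqrt; lra).
  set (c := x1 / sp). set (s := - y1 / sp).
  set (mu := - (k / p)). set (nu := / p).
  assert (Hsnu : sqrt nu = / sp) by (unfold nu, sp; apply sqrt_inv).
  assert (HSO : in_SO2 c s).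
  { unfold in_SO2, c, s.
    assert (E : (x1/sp)^2 + (-y1/sp)^2 = (x1^2+y1^2)/(sp*sp)) by (field; lra).
    rewrite E, Hsp2. fold p. field. lra. }
  assert (Hr' : 0 < INR r) by (apply lt_0_INR; auto).
  assert (Hxa : xr al0 = x1) by (apply (ph_xr L r phi Hr0 Hhom Hrange)).
  assert (Hya : xim al0 = y1) by (apply (ph_xim L r phi Hr0 Hhom Hrange)).
  assert (Hxb : xr be0 = x2) by (apply (ph_xr L r phi Hr0 Hhom Hrange)).
  assert (Hyb : xim be0 = y2) by (apply (ph_xim L r phi Hr0 Hhom Hrange)).
  assert (Hxg : xr ga0 = 0) by (unfold ga0; rewrite (ph_xr L r phi Hr0 Hhom Hrange); unfold cmb; simpl; ring).
  assert (Hyg : xim ga0 = 0) by (unfold ga0; rewrite (ph_xim L r phi Hr0 Hhom Hrange); unfold cmb; simpl; ring).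
  assert (Hta : tc al0 = 0) by (apply (ph_tc L phi Hrange)).
  assert (Htb : tc be0 = 0) by (apply (ph_tc L phi Hrange)).
  assert (Htg : tc ga0 = 0) by (apply (ph_tc L phi Hrange)).
  assert (Hzg : zc ga0 = / INR r).
  { unfold ga0. rewrite (ph_zc L r phi Hr0 Hhom Hrange), Heps.
    apply (Rmult_eq_reg_l (INR r)); [|lra].
    replace (INR r * (om * z0 phi)) with (om * (INR r * z0 phi)) by ring.
    rewrite Hcomm. field_simplify; [|lra]. unfold om in *. lra. }
  assert (HA : F_S c s al0 = mkOsc (/ sqrt nu) 0 (zc al0) 0).
  { unfold F_S. rewrite Hxa, Hya, Hta. f_equal.
    - rewrite Hsnu, Rinv_inv. transitivity ((x1^2+y1^2)/sp). unfold c, s; field; lra.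
      fold p. rewrite <- Hsp2; field; lra.
    - unfold c, s; field; lra. }
  assert (HB : F_S c s be0 = mkOsc (- mu / sqrt nu) (sqrt nu) (zc be0) 0).
  { unfold F_S. rewrite Hxb, Hyb, Htb. f_equal.
    - transitivity (k/sp). unfold c, s, k; field; lra.
      rewrite Hsnu; unfold mu; rewrite <- Hsp2; field; lra.
    - transitivity ((x1*y2 - y1*x2)/sp). unfold c, s; field; lra.
      rewrite Hdet, Hsnu; field; lra. }
  assert (HG : F_S c s ga0 = mkOsc 0 0 (/ INR r) 0).
  { unfold F_S. rewrite Hxg, Hyg, Hzg, Htg. f_equal; ring. }
  change (in_F mu nu) in HF.
  assert (HFb : 0 < nu /\ -/2 <= mu <= /2 /\ 1 <= mu^2 + nu^2).
  { destruct HF as [[? [? ?]]|[? [? ?]]]; repeat split; lra. }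
  destruct HFb as [Hnu0 [Hmub Hmn]].
  assert (Hnup : nu * p = 1) by (unfold nu; field; lra).
  assert (Hmu2 : mu^2 <= /4) by nra.
  assert (Hp2 : p^2 <= 4/3).
  { assert (H1 : p^2 * 1 <= p^2 * (mu^2+nu^2)) by (apply Rmult_le_compat_l; nra).
    replace (p^2 * (mu^2+nu^2)) with (mu^2 * p^2 + (nu*p)^2) in H1 by ring.
    rewrite Hnup in H1. nra. }
  destruct (Hint a1 b1) as [n1 Hn1]. change (sin l * p = IZR n1 * om) in Hn1.
  destruct (Hint a2 b2) as [n2 Hn2]. change (sin l * q2 = IZR n2 * om) in Hn2.
  rewrite <- Heps, <- mult_IZR in Hn1, Hn2.
  assert (Hmuk : mu * p = - k) by (unfold mu; field; lra).
  assert (Hq4 : q = 4%nat -> mu = 0 /\ nu = 1).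
  { intro Hq4. assert (Hsin : sin l = 1) by (destruct Hcases as [[? ?]|[[? ?]|[[? ?]|[[? [? ?]]|[? ?]]]]]; auto; lia).
    rewrite Hsin, Rmult_1_l in Hn1, Hn2.
    assert (HN : (n1 * eps = 1)%Z).
    { assert (0 < IZR (n1*eps)) by lra. assert (IZR (n1*eps) < 2) by nra.
      apply lt_IZR in H. apply lt_IZR in H0. lia. }
    rewrite HN in Hn1. simpl in Hn1.
    assert (Hq2 : q2 = k^2 + 1) by (rewrite <- Hlag, Hn1; ring).
    assert (Hk : mu = - k) by (rewrite <- Hmuk, Hn1; ring).
    assert (HN2 : (n2 * eps = 1)%Z).
    { assert (1 <= IZR (n2*eps)) by nra. assert (IZR (n2*eps) < 2) by nra.
      apply le_IZR in H. apply lt_IZR in H0. lia. }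
    rewrite HN2 in Hn2. simpl in Hn2.
    split. nra. rewrite Hn1 in Hnup. lra. }
  assert (Hq36 : (q = 3%nat \/ q = 6%nat) -> mu = / 2 /\ nu = sqrt 3 / 2).
  { intro Hq36. assert (Hsin : sin l = sqrt 3 / 2) by (destruct Hcases as [[? ?]|[[? ?]|[[? [? ?]]|[[? [? ?]]|[? [? ?]]]]]]; auto; lia).
    rewrite Hsin in Hn1.
    assert (H3 : sqrt 3 * sqrt 3 = 3) by (apply sqrt_sqrt; lra).
    assert (H3' : 0 < sqrt 3) by (apply sqrt_lt_R0; lra).
    assert (HN : (n1 * eps = 1)%Z).
    { assert (0 < IZR (n1*eps)) by nra. assert (IZR (n1*eps) < 2) by nra.
      apply lt_IZR in H. apply lt_IZR in H0. lia. }
    rewrite HN in Hn1. simpl in Hn1.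
    assert (Hnu : nu = sqrt 3 / 2).
    { transitivity (nu * (sqrt 3 / 2 * p)). rewrite Hn1; ring.
      replace (nu * (sqrt 3 / 2 * p)) with (sqrt 3 / 2 * (nu * p)) by ring. rewrite Hnup; ring. }
    split; auto.
    assert (Hm2 : mu^2 >= /4) by (rewrite Hnu in Hmn; nra).
    destruct HF as [[? [? ?]]|[? [? ?]]]; nra. }
  assert (Hsn : 0 < sqrt nu) by (apply sqrt_lt_R0; lra).
  exists c, s. split; [exact HSO|]. exists (zc al0), (zc be0), mu, nu. split; [exact HF|].
  cbv zeta. rewrite <- HA, <- HB, <- HG.
  set (A := F_S c s al0). set (B := F_S c s be0). set (G := F_S c s ga0).
  set (Lim := image_FS c s L).
  assert (HLim : subgroup Lim) by (apply image_sub; auto).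
  assert (HinLim : forall h, L h -> Lim (F_S c s h)) by (intros h Hh; exists h; auto).
  assert (LA : Lim A) by (apply HinLim, (ph_L L phi Hrange)).
  assert (LB : Lim B) by (apply HinLim, (ph_L L phi Hrange)).
  assert (LG : Lim G) by (apply HinLim, (ph_L L phi Hrange)).
  assert (tA : tc A = 0) by (unfold A; rewrite HA; reflexivity).
  assert (tB : tc B = 0) by (unfold B; rewrite HB; reflexivity).
  assert (tG : tc G = 0) by (unfold G; rewrite HG; reflexivity).
  assert (HG1 : forall g, inH Lim g <-> gen (set3 A B G) g).
  { intro g; split.
    - intros [[h [Hh ->]] Ht]. simpl in Ht.
      assert (Hh' : inH L h) by (split; auto).
      apply Hrange in Hh'. destruct Hh' as [x <-].
      pose proof (Qall (Z.of_nat r) phi (set3 al0 be0 ga0) Hhom (ph_inv L r phi Hhom Hrange)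
        (ph0 L r phi Hhom Hrange) a1 b1 a2 b2 eps He Heps1
        (gen_base _ _ (or_introl eq_refl)) (gen_base _ _ (or_intror (or_introl eq_refl)))
        (gen_base _ _ (or_intror (or_intror eq_refl))) x) as Hx.
      apply (gen_F c s _ _ HSO) in Hx. eapply gen_mono; [|exact Hx].
      intros y [x' [Hx' ->]]. unfold set3 in *. destruct Hx' as [ ->|[ ->| ->]]; auto.
    - intro Hg. apply (gen_sub (set3 A B G) (inH Lim)); [apply inH_sub; exact HLim| |exact Hg].
      intros x [ ->|[ ->| ->]]; split; auto. }
  assert (HG2 : forall d, Lim d -> tc d = l -> generates Lim A B G d).
  { intros d Hd Htd g. split.
    - intro Hg. destruct Hg as [h [Hh Hgh]].
      destruct (proj1 (Hproj (tc h)) (ex_intro _ h (conj Hh eq_refl))) as [kk Hkk].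
      set (dk := osc_zpow d kk).
      assert (Ldk : Lim dk) by (apply zpow_sub; auto).
      assert (Lg : Lim g) by (exists h; auto).
      assert (Le : inH Lim (osc_mul g (osc_inv dk))).
      { split. destruct HLim as [_ [H2 H3]]. apply H2; auto.
        rewrite tc_mul, tc_inv. unfold dk. rewrite tc_zpow, Htd, Hgh. simpl. rewrite Hkk. ring. }
      apply HG1 in Le.
      rewrite <- (mul_inv_cancel g dk). apply gen_mul.
      + eapply gen_mono; [|exact Le]. intros x [ ->|[ ->| ->]]; unfold set4; auto.
      + apply gen_zpow, gen_base. unfold set4; auto.
    - intro Hg. apply (gen_sub (set4 A B G d) Lim); auto. intros x [ ->|[ ->|[ ->| ->]]]; auto. }
  split.
  { exists (F_S c s g0). apply HG2; [apply HinLim; auto|simpl; auto]. }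
  split; [exact Hq4|]. split; [exact Hq36|].
  intros d Hd Htd.
  unfold adapted. split; [apply HG2; auto|]. split; [exact Htd|]. split; [exact HG1|].
  split.
  { split; [split; auto|]. intros h _. apply central; unfold G; rewrite HG; reflexivity. }
  split.
  { unfold A, B, G. rewrite HA, HB, HG. rewrite pow0 by reflexivity.
    unfold osc_mul, osc_inv. cbn [xr xim zc tc].
    repeat rewrite Rplus_0_l. rewrite ?Ropp_0, ?Rplus_0_l, ?cos_0, ?sin_0.
    f_equal; field; repeat split; lra. }
  split.
  { assert (Hsn2 : sqrt nu * sqrt nu = nu) by (apply sqrt_sqrt; lra).
    assert (Ld : Lim d) by exact Hd.
    destruct Hcases as [[Hq1 [Hc Hs]]|[[Hq1 [Hc Hs]]|[[Hq1 [Hc Hs]]|[[Hq1 [Hc Hs]]|[Hq1 [Hc Hs]]]]]].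
    - exists 1%Z, 0%Z, 0%Z, 1%Z. split; [|left; reflexivity].
      split; apply cm_helper; auto; rewrite Htd, Hc, Hs; unfold A, B; rewrite HA, HB; cbn [xr xim]; field; lra.
    - exists (-1)%Z, 0%Z, 0%Z, (-1)%Z. split; [|right; left; reflexivity].
      split; apply cm_helper; auto; rewrite Htd, Hc, Hs; unfold A, B; rewrite HA, HB; cbn [xr xim]; field; lra.
    - destruct (Hq36 (or_introl Hq1)) as [Hmu Hnu].
      set (sn := sqrt nu) in *. rewrite Hnu in Hsn2.
      assert (H3 : sqrt 3 = 2 * (sn * sn)) by lra.
      assert (Hs3 : sqrt 3 * sqrt 3 = 3) by (apply sqrt_sqrt; lra).
      assert (H4 : sn^4 = 3/4) by (replace (sn^4) with ((sn*sn)*(sn*sn)) by ring; rewrite Hsn2; nra).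
      assert (Hsn0 : 0 < sn) by exact Hsn.
      exists 0%Z, (-1)%Z, 1%Z, (-1)%Z. split; [|do 2 right; left; reflexivity].
      split; apply cm_helper; auto; rewrite Htd, Hc, Hs; unfold A, B; rewrite HA, HB; cbn [xr xim];
        fold sn; rewrite ?H3, ?Hmu; apply (Rmult_eq_reg_r sn); try lra; field_simplify; try nra.
    - destruct (Hq4 Hq1) as [Hmu Hnu].
      exists 0%Z, (-1)%Z, 1%Z, 0%Z. split; [|do 3 right; left; reflexivity].
      split; apply cm_helper; auto; rewrite Htd, Hc, Hs; unfold A, B; rewrite HA, HB; cbn [xr xim];
        rewrite ?Hmu, ?Hnu, ?sqrt_1; field.
    - destruct (Hq36 (or_intror Hq1)) as [Hmu Hnu].
      set (sn := sqrt nu) in *. rewrite Hnu in Hsn2.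
      assert (H3 : sqrt 3 = 2 * (sn * sn)) by lra.
      assert (Hs3 : sqrt 3 * sqrt 3 = 3) by (apply sqrt_sqrt; lra).
      assert (H4 : sn^4 = 3/4) by (replace (sn^4) with ((sn*sn)*(sn*sn)) by ring; rewrite Hsn2; nra).
      assert (Hsn0 : 0 < sn) by exact Hsn.
      exists 1%Z, (-1)%Z, 1%Z, 0%Z. split; [|do 4 right; reflexivity].
      split; apply cm_helper; auto; rewrite Htd, Hc, Hs; unfold A, B; rewrite HA, HB; cbn [xr xim];
        fold sn; rewrite ?H3, ?Hmu; apply (Rmult_eq_reg_r sn); try lra; field_simplify; try nra. }
  unfold A, B. rewrite HA, HB. simpl.
  replace (/ sqrt nu * sqrt nu - 0 * (- mu / sqrt nu)) with 1 by (field; lra). lra.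
Qed.
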